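(* Let $k\ge1$ and consider the exponential mixture density on $(0,\infty)$ $$f(x\mid\lambda,\boldsymbol\gamma,\mathbf p)=\sum_{i=1}^k\frac{p_i}{\lambda_i}e^{-x/\lambda_i},\qquad\lambda_i=\frac{\lambda\gamma_i}{p_i},$$ where $\lambda>0$, $p_i>0$ with $\sum_ip_i=1$, and $\gamma_i>0$ with $\sum_i\gamma_i=1$ (so that $\lambda$ is the mean of the mixture). Put the prior $\lambda^{-1}\,\mathrm d\lambda\times\pi_0(\mathrm d(\boldsymbol\gamma,\mathbf p))$ where $\pi_0$ is any proper probability distribution on $(\boldsymbol\gamma,\mathbf p)$. Then for any sample $x_1,\dots,x_n>0$ with $n\ge1$, the posterior distribution is proper, i.e. $0<\int\prod_{j=1}^n f(x_j\mid\lambda,\boldsymbol\gamma,\mathbf p)\,\lambda^{-1}\mathrm d\lambda\,\pi_0(\mathrm d(\boldsymbol\gamma,\mathbf p))<\infty$.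
   Context: A posterior is proper when likelihood times prior has finite positive total integral over the parameter space. *)

(* Defs.v *)
From HB Require Import structures.
From mathcomp Require Import all_boot all_order all_algebra.
From mathcomp Require Import all_classical all_reals all_analysis.
Set Implicit Arguments. Unset Strict Implicit. Unset Printing Implicit Defensive.
Import Order.TTheory GRing.Theory Num.Theory.
Local Open Scope ring_scope.

Definition in_simplex (R : realType) (k : nat) (w : 'I_k -> R) : Prop :=
  (forall i, 0 < w i) /\ \sum_(i < k) w i = 1.

Definition comp_scale (R : realType) (k : nat) (lam : R) (gam p : 'I_k -> R)
  (i : 'I_k) : R := lam * gam i / p i.

Definition expmix_density (R : realType) (k : nat) (lam : R) (gam p : 'I_k -> R)
  (x : R) : R :=
  \sum_(i < k) p i / comp_scale lam gam p i * expR (- (x / comp_scale lam gam p i)).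

(* likelihood of the sample times the improper density lambda^-1 *)
Definition post_kernel (R : realType) (k n : nat) (xs : 'I_n -> R)
  (lam : R) (gam p : 'I_k -> R) : R :=
  (\prod_(j < n) expmix_density lam gam p (xs j)) * lam^-1.

(* Main.v *)
Require Import Defs.
From HB Require Import structures.
From mathcomp Require Import all_boot all_order all_algebra.
From mathcomp Require Import all_classical all_reals all_analysis.
From mathcomp Require Import ring lra.
From mathcomp Require Import measurable_realfun.
Import Order.TTheory GRing.Theory Num.Theory.
Import numFieldNormedType.Exports.
Local Open Scope classical_set_scope.
Local Open Scope ring_scope.

Lemma cont_bx2 {R : realType} (b x : R) : x != 0 -> {for x, continuous (fun y : R => b / y ^+ 2)}.
Proof.
move=> x0.
apply: cvgM; first exact: cvg_cst.
apply: cvgV; first by rewrite expf_neq0.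
by apply: cvgM; exact: cvg_id.
Qed.

Lemma tail {R : realType} (b : R) : 0 < b ->
  (\int[@lebesgue_measure R]_(x in `[b, +oo[) (b * (x ^+ 2)^-1)%:E = 1%:E)%E.
Proof.
move=> b0.
have dF x : x != 0 -> derivable (fun y : R => - (b * y^-1)) x 1.
  move=> x0; apply: derivableN; apply: derivableM; first exact: derivable_cst.
  exact: derivableV.
rewrite (@ge0_continuous_FTC2y R (fun x : R => b * (x ^+ 2)^-1) (fun y => - (b * y^-1)) b 0).
- by rewrite -EFinB divff ?gt_eqF// sub0r opprK.
- by move=> x bx; apply: mulr_ge0; [exact: ltW|rewrite invr_ge0 sqr_ge0].
- apply: continuous_in_subspaceT => x; rewrite inE /= in_itv /= andbT => bx.
  have x0 : x != 0 by rewrite gt_eqF// (lt_le_trans b0).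
  apply: cvgM; first exact: cvg_cst.
  apply: cvgV; first by rewrite expf_neq0.
  by apply: cvgM; exact: cvg_id.
- rewrite -oppr0; apply: cvgN; rewrite -(mulr0 b); apply: cvgMr.
  apply/gtr0_cvgV0; first by near=> x.
  exact: cvg_id.
- by move=> x bx; apply: dF; rewrite gt_eqF// (lt_trans b0).
- have bn0 : b != 0 by rewrite gt_eqF.
  have := dF b bn0 => /derivable1_diffP/differentiable_continuous.
  exact: cvg_at_right_filter.
- move=> x; rewrite in_itv /= andbT => bx.
  have x0 : x != 0 by rewrite gt_eqF// (lt_trans b0).
  rewrite derive1E deriveN; last first.
    apply: derivableM; first exact: derivable_cst. exact: derivableV.
  rewrite deriveM//; last exact: derivableV.
  rewrite deriveV// derive_id derive_cst.
  by rewrite scaler0 addr0 [_%:A]mulr1 -[b *: _]/(b * _) mulrN opprK.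
Unshelve. all: by end_near. Qed.


Definition hh {R : realType} (b c l : R) : R := b / l ^+ 2 * expR (- (c * b / l)).

Lemma hh_ge0 {R : realType} (b c l : R) : 0 <= b -> 0 <= hh b c l.
Proof. by move=> b0; rewrite /hh mulr_ge0 ?expR_ge0// divr_ge0// sqr_ge0. Qed.

Lemma hhA {R : realType} (b c l : R) : 0 < b -> 0 < c -> 0 < l ->
  hh b c l <= 2 / (c ^+ 2 * b).
Proof.
move=> b0 c0 l0; rewrite /hh.
set u := c * b / l.
have u0 : 0 < u by rewrite /u divr_gt0// mulr_gt0.
have -> : b / l ^+ 2 = u ^+ 2 / (c ^+ 2 * b).
  by rewrite /u; field; rewrite ?gt_eqF// ?mulf_neq0 ?expf_neq0 ?gt_eqF.
rewrite mulrAC ler_wpM2r//; first by rewrite invr_ge0 mulr_ge0 ?sqr_ge0 ?ltW.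
rewrite expRN ler_pdivrMr ?expR_gt0//.
have := expR_ge1Dxn 1 (ltW u0).
rewrite /= => h.
have h2 : 0 <= u ^+ 2 by rewrite sqr_ge0.
rewrite (_ : (2`!)%:R = 2 :> R) in h; last by [].
lra.
Qed.

Lemma hhB {R : realType} (b c l : R) : 0 <= b -> 0 < c -> 0 < l ->
  hh b c l <= b * (l ^+ 2)^-1.
Proof.
move=> b0 c0 l0; rewrite /hh -[leRHS]mulr1 ler_wpM2l ?divr_ge0 ?sqr_ge0//.
by rewrite expR_le1 oppr_le0 divr_ge0// ?mulr_ge0// ltW.
Qed.

Lemma mV {d} {T : measurableType d} {R : realType} (D : set T) (f : T -> R) :
  measurable_fun D f -> (forall x, D x -> 0 < f x) ->
  measurable_fun D (fun x => (f x)^-1).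
Proof.
move=> mf f0.
apply: (eq_measurable_fun (fun x => expR (- ln (f x)))).
  by move=> x; rewrite inE => Dx; rewrite expRN lnK // posrE f0.
apply: measurableT_comp; first exact: measurable_realfun.measurable_expR.
apply: measurable_funN.
by apply: measurableT_comp; first exact: measurable_realfun.measurable_ln.
Qed.

Lemma hint {R : realType} (b c : R) : 0 < b -> 0 < c ->
  (\int[@lebesgue_measure R]_(x in `]0%R, +oo[) (hh b c x)%:E <= (2 / c ^+ 2 + 1)%:E)%E.
Proof.
move=> b0 c0.
have mD : measurable_fun (`]0, +oo[%classic : set R) (fun x : R => (hh b c x)%:E).
  apply/measurable_EFinP; rewrite /hh.
  have pos : forall x : R, (`]0, +oo[%classic : set R) x -> 0 < x.
    by move=> x; rewrite /= in_itv /= andbT.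
  apply: measurable_funM.
    apply: measurable_funM; first exact: measurable_cst.
    apply: mV; last by move=> x /pos x0; rewrite exprn_gt0.
    exact: measurable_funX.
  apply: measurableT_comp; first exact: measurable_realfun.measurable_expR.
  apply: measurable_funN; apply: measurable_funM; first exact: measurable_cst.
  by apply: mV.
rewrite (@itv_bndbnd_setU _ _ _ (BRight b)); last 2 first.
- by rewrite bnd_simp ltW.
- by [].
rewrite ge0_integral_setU //; last 3 first.
- by rewrite -itv_bndbnd_setU// bnd_simp ltW.
- by move=> x _; rewrite lee_fin hh_ge0// ltW.
- apply/disj_setPS => x []; rewrite /= !in_itv /= => /andP[_ xb] /andP[bx _].
  by move: (lt_le_trans bx xb); rewrite ltxx.
have subs : forall (i : interval R), ([set` i] `<=` `]0%R, +oo[) -> measurable_fun [set` i] (fun x : R => (hh b c x)%:E).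
  by move=> i si; apply: measurable_funS mD.
rewrite EFinD; apply: leeD.
- apply: le_trans.
    apply: (@ge0_le_integral _ _ _ _ _ _ _ (fun x => (cst (2 / (c ^+ 2 * b))%:E x))) => //.
    + by move=> x _; rewrite lee_fin hh_ge0// ltW.
    + apply: subs => x /=; rewrite !in_itv /= => /andP[-> _]; by [].
    + move=> x /=; rewrite in_itv /= => /andP[x0 _].
      by rewrite lee_fin hhA.
  rewrite integral_cst //.
  rewrite -[X in (_ * X)%E]/(lebesgue_measure (`]0%R, b]%classic : set R)).
  rewrite lebesgue_measure_itv /= lte_fin b0 -EFinB -EFinM lee_fin subr0.
  rewrite le_eqVlt; apply/orP; left; apply/eqP; field.
  by rewrite !gt_eqF// exprn_gt0.
have mB : forall (i : interval R), ([set` i] `<=` `]0%R, +oo[) ->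
    measurable_fun [set` i] (fun x : R => (b * (x ^+ 2)^-1)%:E).
  move=> i si; apply/measurable_EFinP.
  apply: measurable_funM; first exact: measurable_cst.
  apply: mV; last by move=> x /si; rewrite /= in_itv /= andbT => x0; rewrite exprn_gt0.
  exact: measurable_funX.
have h : (\int[@lebesgue_measure R]_(x in `]b, +oo[) (hh b c x)%:E <=
   \int[@lebesgue_measure R]_(x in `]b, +oo[) (b * (x ^+ 2)^-1)%:E)%E.
  apply: ge0_le_integral => //.
  + by move=> x _; rewrite lee_fin hh_ge0// ltW.
  + apply: subs => x /=; rewrite !in_itv /= !andbT; exact: lt_trans.
  + apply: mB => x /=; rewrite !in_itv /= !andbT; exact: lt_trans.
  + move=> x /=; rewrite in_itv /= andbT => bx.
    by rewrite lee_fin hhB// ?ltW// (lt_trans b0).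
apply: le_trans h _.
rewrite integral_itv_obnd_cbnd; first by rewrite tail.
apply: mB => x /=; rewrite !in_itv /= !andbT; exact: lt_trans.
Qed.


Lemma term_le {R : realType} (x l g pp : R) : 0 < x -> 0 < l -> 0 < g -> 0 < pp ->
  pp / (l * g / pp) * expR (- (x / (l * g / pp))) <= pp / x.
Proof.
move=> x0 l0 g0 p0.
set u := x / (l * g / pp).
have u0 : 0 < u by rewrite /u divr_gt0// divr_gt0// mulr_gt0.
have -> : pp / (l * g / pp) = pp / x * u.
  by rewrite /u; field; rewrite !gt_eqF.
rewrite -mulrA; apply: ler_piMr; first by rewrite divr_ge0// ltW.
rewrite expRN ler_pdivrMr ?expR_gt0// mul1r.
have := expR_ge1Dx u; lra.
Qed.

Lemma term_eq {R : realType} (x l g pp : R) : 0 < l -> 0 < g -> 0 < pp ->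
  pp / (l * g / pp) * expR (- (x / (l * g / pp))) * l^-1 = pp * hh (pp / g) x l.
Proof.
move=> l0 g0 p0; rewrite /hh.
have -> : x / (l * g / pp) = x * (pp / g) / l by field; rewrite !gt_eqF.
by field; rewrite !gt_eqF.
Qed.

Lemma term_gt0 {R : realType} (x l g pp : R) : 0 < l -> 0 < g -> 0 < pp ->
  0 < pp / (l * g / pp) * expR (- (x / (l * g / pp))).
Proof.
by move=> l0 g0 p0; rewrite mulr_gt0 ?expR_gt0// divr_gt0// divr_gt0// mulr_gt0.
Qed.

Lemma f_le {R : realType} (k : nat) (g pp : 'I_k -> R) (l x : R) :
  in_simplex g -> in_simplex pp -> 0 < l -> 0 < x ->
  expmix_density l g pp x <= x^-1.
Proof.
move=> [g0 _] [p0 p1] l0 x0; rewrite /expmix_density /comp_scale.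
apply: (@le_trans _ _ (\sum_(i < k) pp i / x)).
  by apply: ler_sum => i _; exact: term_le.
by rewrite -mulr_suml p1 mul1r.
Qed.

Lemma f_gt0 {R : realType} (k : nat) (g pp : 'I_k -> R) (l x : R) :
  (1 <= k)%N -> in_simplex g -> in_simplex pp -> 0 < l ->
  0 < expmix_density l g pp x.
Proof.
move=> hk [g0 _] [p0 _] l0; rewrite /expmix_density /comp_scale.
rewrite (bigD1 (Ordinal hk)) //= ltr_wpDr ?term_gt0// ?g0 ?p0//.
by apply: sumr_ge0 => i _; apply/ltW/term_gt0.
Qed.

Lemma pk_gt0 {R : realType} (k n : nat) (xs : 'I_n -> R) (g pp : 'I_k -> R) (l : R) :
  (1 <= k)%N -> in_simplex g -> in_simplex pp -> 0 < l ->
  0 < post_kernel xs l g pp.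
Proof.
move=> hk hg hp l0; rewrite /post_kernel mulr_gt0 ?invr_gt0//.
by apply: prodr_gt0 => j _; apply: f_gt0.
Qed.

Lemma bound_pk {R : realType} (k n : nat) (xs : 'I_n.+1 -> R) (g pp : 'I_k -> R) (l : R) :
  (forall j, 0 < xs j) -> in_simplex g -> in_simplex pp -> 0 < l ->
  post_kernel xs l g pp <=
  \sum_(i < k) ((\prod_(j < n) (xs (lift ord0 j))^-1) * pp i) * hh (pp i / g i) (xs ord0) l.
Proof.
move=> hx hg hp l0; rewrite /post_kernel big_ord_recl.
have hg' := hg; have hp' := hp; move: hg' hp' => [g0 _] [p0 _].
have fE : expmix_density l g pp (xs ord0) * l^-1 = \sum_(i < k) pp i * hh (pp i / g i) (xs ord0) l.
  rewrite /expmix_density /comp_scale mulr_suml; apply: eq_bigr => i _.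
  exact: term_eq.
rewrite mulrAC fE mulr_suml.
apply: ler_sum => i _.
rewrite [X in _ <= X](_ : _ = pp i * hh (pp i / g i) (xs ord0) l * \prod_(j < n) (xs (lift ord0 j))^-1); last by ring.
rewrite ler_wpM2l//.
  by rewrite mulr_ge0 ?hh_ge0 ?divr_ge0 ?ltW.
apply: ler_prod => j _; apply/andP; split.
  rewrite /expmix_density /comp_scale; apply: sumr_ge0 => i0 _.
  by apply/ltW/term_gt0.
exact: f_le.
Qed.

Lemma m_post {R : realType} {d'} {U : measurableType d'} (k n : nat) (xs : 'I_n -> R)
  (D : set U) (lamf : U -> R) (gf pf : U -> 'I_k -> R) :
  measurable_fun D lamf -> (forall i, measurable_fun D (fun u => gf u i)) ->
  (forall i, measurable_fun D (fun u => pf u i)) ->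
  (forall u, D u -> 0 < lamf u) -> (forall u i, D u -> 0 < gf u i) ->
  (forall u i, D u -> 0 < pf u i) ->
  measurable_fun D (fun u => post_kernel xs (lamf u) (gf u) (pf u)).
Proof.
move=> ml mg mp l0 g0 p0; rewrite /post_kernel /expmix_density /comp_scale.
have mcs i : measurable_fun D (fun u => lamf u * gf u i / pf u i).
  apply: measurable_funM; first exact: measurable_funM.
  by apply: mV => // u Du; exact: p0.
have cs0 i u : D u -> 0 < lamf u * gf u i / pf u i.
  by move=> Du; rewrite divr_gt0 ?mulr_gt0 ?l0 ?g0 ?p0.
apply: measurable_funM; last exact: mV.
apply: measurable_prod => j _; apply: measurable_sum => i.
apply: measurable_funM.
  by apply: measurable_funM => //; apply: mV => // u Du; exact: cs0.
apply: measurableT_comp; first exact: measurable_realfun.measurable_expR.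
apply: measurable_funN; apply: measurable_funM; first exact: measurable_cst.
by apply: mV => // u Du; exact: cs0.
Qed.

Lemma mhh {R : realType} (b c : R) :
  measurable_fun (`]0%R, +oo[%classic : set R) (fun x : R => hh b c x).
Proof.
rewrite /hh.
have pos : forall x : R, (`]0, +oo[%classic : set R) x -> 0 < x.
  by move=> x; rewrite /= in_itv /= andbT.
apply: measurable_funM.
  apply: measurable_funM; first exact: measurable_cst.
  apply: mV; last by move=> x /pos x0; rewrite exprn_gt0.
  exact: measurable_funX.
apply: measurableT_comp; first exact: measurable_realfun.measurable_expR.
apply: measurable_funN; apply: measurable_funM; first exact: measurable_cst.
by apply: mV.
Qed.

Lemma pk_ge0 {R : realType} (k n : nat) (xs : 'I_n -> R) (g pp : 'I_k -> R) (l : R) :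
  in_simplex g -> in_simplex pp -> 0 < l -> 0 <= post_kernel xs l g pp.
Proof.
move=> [g0 _] [p0 _] l0; rewrite /post_kernel; apply: mulr_ge0; last by rewrite invr_ge0 ltW.
apply: prodr_ge0 => j _; rewrite /expmix_density /comp_scale; apply: sumr_ge0 => i _.
by apply/ltW/term_gt0.
Qed.

Lemma inner {R : realType} (k n : nat) (xs : 'I_n.+1 -> R) (g pp : 'I_k -> R) :
  (forall j, 0 < xs j) -> in_simplex g -> in_simplex pp ->
  (\int[@lebesgue_measure R]_(x in `]0%R, +oo[) (post_kernel xs x g pp)%:E <=
   ((\prod_(j < n) (xs (lift ord0 j))^-1) * (2 / (xs ord0) ^+ 2 + 1))%:E)%E.
Proof.
move=> hx hg hp; have [g0 _] := hg; have [p0 p1] := hp.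
set C := \prod_(j < n) _; set x0 := xs ord0.
have C0 : 0 <= C by apply: prodr_ge0 => j _; rewrite invr_ge0 ltW.
have pos : forall x : R, (`]0%R, +oo[%classic : set R) x -> 0 < x.
  by move=> x; rewrite /= in_itv /= andbT.
have h1 : (\int[@lebesgue_measure R]_(x in `]0%R, +oo[) (post_kernel xs x g pp)%:E <=
    \int[@lebesgue_measure R]_(x in `]0%R, +oo[)
       (\sum_(i < k) (C * pp i) * hh (pp i / g i) x0 x)%:E)%E.
  apply: ge0_le_integral => //.
  - by move=> x /pos xp; rewrite lee_fin pk_ge0.
  - apply/measurable_EFinP.
    apply: (@m_post R _ _ k n.+1 xs _ id (fun _ => g) (fun _ => pp)).
    + exact: measurable_id.
    + by move=> i; exact: measurable_cst.
    + by move=> i; exact: measurable_cst.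
    + exact: pos.
    + by move=> u i _; exact: g0.
    + by move=> u i _; exact: p0.
  - apply/measurable_EFinP; apply: measurable_sum => i.
    apply: measurable_funM; first exact: measurable_cst.
    exact: mhh.
  - by move=> x /pos xp; rewrite lee_fin; apply: bound_pk.
apply: le_trans h1 _.
under eq_integral => x _ do rewrite -sumEFin.
rewrite ge0_integral_sum //; last 2 first.
- move=> i; apply/measurable_EFinP; apply: measurable_funM; first exact: measurable_cst.
  exact: mhh.
- move=> i x /pos xp; rewrite lee_fin; apply: mulr_ge0.
    by apply: mulr_ge0 => //; exact: ltW.
  by apply: hh_ge0; rewrite divr_ge0 //; exact: ltW.
rewrite [leRHS](_ : _ = \sum_(i < k) ((C * pp i)%:E * (2 / x0 ^+ 2 + 1)%:E)%E); last first.
  rewrite sumEFin; congr EFin.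
  by rewrite -mulr_suml -mulr_sumr p1 mulr1.
apply: lee_sum => i _.
under eq_integral => x _ do rewrite EFinM.
rewrite ge0_integralZl //; last 3 first.
- apply/measurable_EFinP; exact: mhh.
- by move=> x /pos xp; rewrite lee_fin; apply: hh_ge0; rewrite divr_ge0 //; exact: ltW.
- by rewrite lee_fin; apply: mulr_ge0 => //; exact: ltW.
apply: lee_wpmul2l; first by rewrite lee_fin; apply: mulr_ge0 => //; exact: ltW.
apply: hint; first by rewrite divr_gt0.
exact: hx.
Qed.

Theorem theorem3 (R : realType) (k n : nat) (d : measure_display)
  (T : measurableType d) (pi0 : probability T R)
  (gam p : T -> 'I_k -> R)
  (hk : (1 <= k)%N) (hn : (1 <= n)%N)
  (gam_meas : forall i : 'I_k, measurable_fun setT (fun t => gam t i))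
  (p_meas : forall i : 'I_k, measurable_fun setT (fun t => p t i))
  (gam_simplex : forall t, in_simplex (gam t))
  (p_simplex : forall t, in_simplex (p t))
  (xs : 'I_n -> R) (hxs : forall j, 0 < xs j) :
  (0 < \int[(@lebesgue_measure R) \x pi0]_(z in [set z | (0 < z.1)%R])
          (post_kernel xs z.1 (gam z.2) (p z.2))%:E
   < +oo)%E.
Proof.
case: n xs hxs hn => [//|n] xs hxs _.
have DE : [set z : R * T | 0 < z.1] = `]0%R, +oo[ `*` [set: T].
  apply/seteqP; split => z /=.
    by rewrite /= in_itv /= andbT.
  by case; rewrite /= in_itv /= andbT.
rewrite DE.
set DD := `]0%R, +oo[ `*` [set: T].
have mD : measurable DD by apply: measurableX => //; exact: measurable_itv.
have pos1 : forall z, DD z -> 0 < z.1.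
  by move=> z [/= + _]; rewrite in_itv /= andbT.
have msnd : measurable_fun DD snd.
  exact: measurable_funS measurableT (@subsetT _ DD) measurable_snd.
have mK : measurable_fun DD (fun z => (post_kernel xs z.1 (gam z.2) (p z.2))%:E).
  apply/measurable_EFinP.
  apply: (@m_post R _ _ k n.+1 xs DD fst (fun z => gam z.2) (fun z => p z.2)).
  - exact: measurable_funS measurableT (@subsetT _ DD) measurable_fst.
  - by move=> i; apply: measurableT_comp (gam_meas i) msnd.
  - by move=> i; apply: measurableT_comp (p_meas i) msnd.
  - exact: pos1.
  - by move=> z i _; exact: (gam_simplex z.2).1.
  - by move=> z i _; exact: (p_simplex z.2).1.
have K0 : forall z, DD z -> 0 < post_kernel xs z.1 (gam z.2) (p z.2).
  by move=> z /pos1 z0; apply: pk_gt0.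
apply/andP; split.
- rewrite lt_neqAle integral_ge0 ?andbT; last first.
    by move=> z Dz; rewrite lee_fin ltW // K0.
  apply/negP => /eqP H0.
  have hae := (ae_eq_integral_abs ((@lebesgue_measure R) \x pi0)%E mD mK).1.
  case: hae => [|N [mN N0 sub]].
    rewrite H0; apply: eq_integral => z; rewrite inE => Dz.
    by rewrite gee0_abs // lee_fin ltW // K0.
  have DN : DD `<=` N.
    move=> z Dz; apply: sub => /= /(_ Dz) /eqP.
    by rewrite eqe gt_eqF // K0.
  have := le_measure ((@lebesgue_measure R) \x pi0)%E (mem_set mD) (mem_set mN) DN.
move/le_trans => /(_ 0%E) h.
  have {}h := h ltac:(by rewrite le_eqVlt; apply/orP; left; apply/eqP; exact: N0).
  have E := @product_measure1E _ _ _ _ R (@lebesgue_measure R) pi0 (`]0%R, +oo[%classic : set R) [set: T] (measurable_itv _) measurableT.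
  have h' : ((@lebesgue_measure R) (`]0%R, +oo[%classic : set R) * pi0 [set: T] <= 0)%E.
    by rewrite -E; exact: h.
  move: h'; rewrite probability_setT mule1 lebesgue_measure_itv /=.
  by rewrite ltry oppr0 adde0 leNgt lt0y.
- set M := (\prod_(j < n) (xs (lift ord0 j))^-1) * (2 / (xs ord0) ^+ 2 + 1).
  rewrite integral_mkcond.
  have mf := (measurable_restrictT _ mD).1 mK.
  have f0 : forall z, (0 <= ((fun z => (post_kernel xs z.1 (gam z.2) (p z.2))%:E) \_ DD) z)%E.
    by apply: erestrict_ge0 => z Dz; rewrite lee_fin ltW // K0.
  have E : (\int[((@lebesgue_measure R) \x pi0)%E]_z ((fun z => (post_kernel xs z.1 (gam z.2) (p z.2))%:E) \_ DD) z =
     \int[pi0]_y fubini_G (@lebesgue_measure R) ((fun z => (post_kernel xs z.1 (gam z.2) (p z.2))%:E) \_ DD) y)%E.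
    exact: (@fubini_tonelli2 _ _ _ _ R (@lebesgue_measure R) pi0 _ mf f0).
  rewrite E.
  have I1 : (\int[pi0]_y fubini_G (@lebesgue_measure R) ((fun z => (post_kernel xs z.1 (gam z.2) (p z.2))%:E) \_ DD) y <=
      \int[pi0]_y (cst (M%:E)) y)%E.
    apply: ge0_le_integral => //.
    + by move=> t _; apply: integral_ge0 => x _; exact: f0.
    + exact: measurable_fun_fubini_tonelli_G.
    + move=> t _; rewrite /fubini_G /=.
      have -> : (\int[@lebesgue_measure R]_x ((fun z => (post_kernel xs z.1 (gam z.2) (p z.2))%:E) \_ DD) (x, t) =
          \int[@lebesgue_measure R]_(x in `]0%R, +oo[) (post_kernel xs x (gam t) (p t))%:E)%E.
        rewrite [RHS]integral_mkcond; apply: eq_integral => x _; rewrite !patchE.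
        by rewrite in_setX /= in_setT andbT.
      exact: inner.
  apply: (le_lt_trans I1).
  rewrite integral_cst //.
  rewrite -[X in (_ * X)%E]/(pi0 [set: T]) probability_setT mule1.
  exact: ltry.
Qed.
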